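(* Let $e\geqslant 1$ and $b\geqslant 2$ be integers. Suppose that $e\not\equiv 1\pmod{p-1}$ for every prime divisor $p$ of $b-1$. Then for every positive integer $m$ there exists an integer $l>0$ such that $l+1,l+2,\ldots,l+m$ are all $(e,b)$-happy.
   Context: For integers $e\geqslant 1$, $b\geqslant 2$ and a positive integer $n=\sum_{j=0}^k a_j b^j$ with $0\leqslant a_j<b$, define $T_{e,b}(n)=\sum_{j=0}^k a_j^e$ (the sum of the $e$-th powers of the base-$b$ digits of $n$). $T_{e,b}^r$ denotes the $r$-th iterate of $T_{e,b}$, with $T_{e,b}^0(n)=n$. A positive integer $n$ is called $(e,b)$-happy if $T_{e,b}^r(n)=1$ for some $r\geqslant 0$. *)

(* Defs.v *)
From mathcomp Require Import all_boot.
Set Implicit Arguments. Unset Strict Implicit. Unset Printing Implicit Defensive.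

(* Sum of e-th powers of base-b digits, with fuel. For b >= 2, fuel n
   suffices since each step strictly decreases the number. *)
Fixpoint digit_pow_sum_aux (fuel e b n : nat) : nat :=
  match fuel with
  | 0 => 0
  | fuel'.+1 =>
      if n == 0 then 0
      else (n %% b) ^ e + digit_pow_sum_aux fuel' e b (n %/ b)
  end.

Definition T (e b n : nat) : nat := digit_pow_sum_aux n e b n.

Definition happy (e b n : nat) : Prop :=
  0 < n /\ exists r : nat, iter r (T e b) n = 1.

(* Main.v *)
Require Import Defs.
From mathcomp Require Import all_boot.
From mathcomp Require Import all_algebra all_fingroup all_solvable zify.
Set Implicit Arguments. Unset Strict Implicit. Unset Printing Implicit Defensive.


Lemma aux_fuel_eq e b : 1 < b -> forall f1 f2 n, n <= f1 -> n <= f2 ->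
  digit_pow_sum_aux f1 e b n = digit_pow_sum_aux f2 e b n.
Proof.
move=> hb; elim=> [|f1 IH] [|f2] n h1 h2 //=.
- by move: h1; rewrite leqn0 => /eqP ->; case: f2 {h2}.
- by move: h2; rewrite leqn0 => /eqP ->.
case: eqP => // /eqP nz; congr (_ + _); apply: IH.
  by rewrite -ltnS (leq_trans _ h1) // ltn_Pdiv // lt0n.
by rewrite -ltnS (leq_trans _ h2) // ltn_Pdiv // lt0n.
Qed.

Lemma T_rec e b n : 1 < b ->
  T e b n = if n == 0 then 0 else (n %% b) ^ e + T e b (n %/ b).
Proof.
move=> hb; rewrite /T; case: n => [|n] //=.
congr (_ + _); apply: aux_fuel_eq => //.
by rewrite -ltnS ltn_Pdiv.
Qed.

Lemma T0 e b : T e b 0 = 0.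
Proof. by []. Qed.

Lemma T_step e b r h : 1 <= e -> 1 < b -> r < b -> T e b (r + b * h) = r ^ e + T e b h.
Proof.
move=> he hb hr; rewrite (T_rec _ _ hb).
case: eqP => [/eqP|_].
  rewrite addn_eq0 muln_eq0 => /andP [/eqP -> /orP [/eqP b0|/eqP ->]].
    by rewrite b0 in hb.
  by rewrite exp0n.
have b0 : 0 < b by apply: ltnW.
rewrite [r + _]addnC mulnC modnMDl modn_small // divnMDl // divn_small // addn0.
by [].
Qed.

Lemma T_shift e b s h r : 1 <= e -> 1 < b -> r < b ^ s -> T e b (h * b ^ s + r) = T e b h + T e b r.
Proof.
move=> he hb; elim: s h r => [|s IH] h r hr.
  by move: hr; rewrite expn0 ltnS leqn0 => /eqP ->; rewrite muln1 addn0 T0 addn0.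
have b0 : 0 < b by apply: ltnW.
have hq : r %/ b < b ^ s by rewrite ltn_divLR // -expnSr.
have hm : r %% b < b by rewrite ltn_mod.
rewrite (divn_eq r b) [_ * b + _]addnC [r %/ b * b]mulnC T_step //.
rewrite [RHS]addnCA -IH // -T_step //; congr (T _ _ _).
by rewrite mulnDr expnS [b * (h * _)]mulnCA addnCA.
Qed.


Definition num (b : nat) (ds : seq nat) := foldr (fun d acc => d + b * acc) 0 ds.
Definition rep b n := num b (nseq n 1).

Lemma T_num e b ds : 1 <= e -> 1 < b -> all (fun d => d < b) ds ->
  T e b (num b ds) = sumn (map (fun d => d ^ e) ds).
Proof.
move=> he hb; elim: ds => [|d ds IH] //= /andP [hd hds].
by rewrite T_step // IH.
Qed.

Lemma num_lt b ds : 0 < b -> all (fun d => d < b) ds -> num b ds < b ^ size ds.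
Proof.
move=> hb; elim: ds => [|d ds IH] //= /andP [hd hds].
have := IH hds => h.
apply: (@leq_trans (b * (num b ds).+1)).
  by rewrite mulnS ltn_add2r.
by rewrite expnS leq_mul2l h orbT.
Qed.

Lemma num_mapS b ds : num b (map S ds) = num b ds + rep b (size ds).
Proof.
elim: ds => [|d ds IH] //=; rewrite /rep /= -/(rep b (size ds)) IH mulnDr.
lia.
Qed.

Lemma T_rep e b n : 1 <= e -> 1 < b -> T e b (rep b n) = n.
Proof.
move=> he hb; rewrite /rep T_num //.
  by rewrite map_nseq exp1n sumn_nseq mul1n.
by apply/allP => x /nseqP [-> _].
Qed.

Lemma num_nseq_pred b k : 0 < b -> num b (nseq k b.-1) = b ^ k - 1.
Proof.
move=> hb; elim: k => [|k IH] //=; rewrite IH expnS.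
have : 1 <= b ^ k by rewrite expn_gt0 hb.
move: (b ^ k) => X hX.
rewrite mulnBr muln1.
have : b <= b * X by rewrite leq_pmulr.
lia.
Qed.

Lemma T_pow e b k : 1 <= e -> 1 < b -> T e b (b ^ k) = 1.
Proof.
move=> he hb; rewrite -[b ^ k]addn0 -[b ^ k]mul1n T_shift ?expn_gt0 ?(ltnW hb) //.
by have := T_step 0 he hb hb; rewrite muln0 addn0 exp1n T0 addn0 => ->.
Qed.

Lemma T_predpow e b k : 1 <= e -> 1 < b -> T e b (b ^ k - 1) = (b.-1) ^ e * k.
Proof.
move=> he hb; rewrite -num_nseq_pred ?(ltnW hb) // T_num //.
  by rewrite map_nseq sumn_nseq.
apply/allP => x /nseqP [-> _]; by rewrite prednK ?(ltnW hb).
Qed.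


Definition good e b (S : seq nat) :=
  exists x, 0 < x /\ forall s, s \in S -> happy e b (x + s).
Definition apply_steps e b (Ls : seq nat) n := foldl (fun n L => T e b (L + n)) n Ls.

Lemma mem_le_sumn s S : s \in S -> s <= sumn S.
Proof.
elim: S => [|y S IH] //=; rewrite inE => /orP [/eqP ->|h]; first exact: leq_addr.
by rewrite (leq_trans (IH h)) // leq_addl.
Qed.


Lemma good_step e b L S : 1 <= e -> 1 < b ->
  good e b (map (fun n => T e b (L + n)) S) -> good e b S.
Proof.
move=> he hb [x [hx H]].
set t := L + sumn S.
have hrep : 0 < rep b x.
  rewrite lt0n; apply/negP => /eqP h0.
  by have := T_rep x he hb; rewrite h0 T0 => hx0; rewrite -hx0 in hx.
exists (rep b x * b ^ t + L); split.
  by rewrite addn_gt0 muln_gt0 hrep expn_gt0 (ltnW hb).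
move=> s hs.
have [_ [r hr]] := H _ (map_f (fun n => T e b (L + n)) hs).
have hLs : L + s < b ^ t.
  apply: (@leq_ltn_trans t); first by rewrite leq_add2l mem_le_sumn.
  exact: ltn_expl.
split; first by rewrite !addn_gt0 muln_gt0 hrep expn_gt0 (ltnW hb).
exists r.+1; rewrite iterSr -addnA T_shift // T_rep //.
Qed.

Lemma good_steps e b Ls S : 1 <= e -> 1 < b ->
  good e b (map (apply_steps e b Ls) S) -> good e b S.
Proof.
move=> he hb; elim: Ls S => [|L Ls IH] S /=.
  by rewrite /apply_steps /= map_id.
move=> h; apply: (good_step (L := L)) => //; apply: IH.
by rewrite -map_comp.
Qed.

Lemma good_const e b S c : 1 <= e -> 1 < b -> (forall s, s \in S -> s = c) -> good e b S.
Proof.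
move=> he hb H.
have hc : c < b ^ c.+1 by apply: leq_trans (ltn_expl _ hb); [].
exists (b ^ c.+1 - c); split; first by rewrite subn_gt0.
move=> s /H ->; rewrite subnK ?(ltnW hc) //; split; first by rewrite expn_gt0 (ltnW hb).
by exists 1; rewrite /= T_pow.
Qed.

Definition Pm e b d := forall a, exists Ls, apply_steps e b Ls a = apply_steps e b Ls (a + d).

Lemma apply_cat e b L1 L2 n : apply_steps e b (L1 ++ L2) n = apply_steps e b L2 (apply_steps e b L1 n).
Proof. by rewrite /apply_steps foldl_cat. Qed.

Lemma collapse e b : (forall d, Pm e b d) ->
  forall S : seq nat, exists Ls c, forall s, s \in S -> apply_steps e b Ls s = c.
Proof.
move=> HP; elim=> [|s S [Ls [c IH]]]; first by exists [::], 0.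
set a := apply_steps e b Ls s.
have [Ls2 h2] : exists Ls2, apply_steps e b Ls2 a = apply_steps e b Ls2 c.
  case: (leqP a c) => hac.
    by have [Ls2 h] := HP (c - a) a; exists Ls2; rewrite h subnKC.
  by have [Ls2 h] := HP (a - c) c; exists Ls2; rewrite h subnKC // ltnW.
exists (Ls ++ Ls2), (apply_steps e b Ls2 c) => x; rewrite inE => /orP [/eqP ->|hx].
  by rewrite apply_cat.
by rewrite apply_cat IH.
Qed.

Lemma P_step e b d v delta : 1 <= e -> 1 < b ->
  (T e b (v + d) = T e b v + delta \/ T e b v = T e b (v + d) + delta) ->
  Pm e b delta -> Pm e b d.
Proof.
move=> he hb hv HP a.
set t := v + d.
have ht : t < b ^ t by apply: ltn_expl.
have hv' : v < b ^ t by apply: leq_ltn_trans ht; apply: leq_addr.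
set u := a * b ^ t + v.
have au : a <= u by apply: leq_trans (leq_addr _ _); rewrite leq_pmulr // expn_gt0 (ltnW hb).
have E1 : T e b ((u - a) + a) = T e b a + T e b v by rewrite subnK // T_shift.
have E2 : T e b ((u - a) + (a + d)) = T e b a + T e b (v + d).
  by rewrite addnA subnK // -addnA T_shift.
case: hv => hv.
  have [Ls h] := HP (T e b a + T e b v).
  exists ((u - a) :: Ls); rewrite /apply_steps /= -/(apply_steps e b Ls _) E1 E2 h.
  by rewrite hv addnA.
have [Ls h] := HP (T e b a + T e b (v + d)).
exists ((u - a) :: Ls); rewrite /apply_steps /= -/(apply_steps e b Ls _) E1 E2.
by rewrite hv addnA -h.
Qed.

Lemma P0 e b : Pm e b 0.
Proof. by move=> a; exists [::]; rewrite addn0. Qed.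

Lemma P_mulM e b q : 1 <= e -> 1 < b -> Pm e b (b.-1 * q).
Proof.
move=> he hb; apply: (@P_step _ _ _ q 0) => //; last exact: P0.
left; rewrite addn0.
have -> : q + b.-1 * q = q * b ^ 1 + 0.
  by rewrite expn1 addn0 mulnC -{1}(muln1 q) -mulnDr add1n prednK // ltnW.
rewrite T_shift ?expn1 ?(ltnW hb) //.
by have -> : T e b 0 = 0 by []; rewrite addn0.
Qed.

Lemma P_cong e b d : 1 <= e -> 1 < b ->
  (exists v, T e b (v + d) = T e b v %[mod b.-1]) -> Pm e b d.
Proof.
move=> he hb [v hv].
case: (leqP (T e b v) (T e b (v + d))) => h.
  have : b.-1 %| T e b (v + d) - T e b v by rewrite -eqn_mod_dvd // hv.
  case/dvdnP => q hq.
  apply: (@P_step _ _ _ v (T e b (v + d) - T e b v)) => //.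
    by left; rewrite subnKC.
  by rewrite hq mulnC; apply: P_mulM.
have : b.-1 %| T e b v - T e b (v + d) by rewrite -eqn_mod_dvd ?hv // ltnW.
case/dvdnP => q hq.
apply: (@P_step _ _ _ v (T e b v - T e b (v + d))) => //.
  by right; rewrite subnKC // ltnW.
by rewrite hq mulnC; apply: P_mulM.
Qed.


Definition Gl (f : nat -> nat) M (l : seq nat) := foldr (fun w g => gcdn g (f w)) M l.

Lemma Gl_dvdM f M l : Gl f M l %| M.
Proof.
elim: l => [|c l IH] //=; exact: dvdn_trans (dvdn_gcdl _ _) IH.
Qed.

Lemma Gl_dvdf f M l w : w \in l -> Gl f M l %| f w.
Proof.
elim: l => [|c l IH] //=; rewrite inE => /orP [/eqP ->|h]; first exact: dvdn_gcdr.
exact: dvdn_trans (dvdn_gcdl _ _) (IH h).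
Qed.

Lemma bez_list f M l t : 0 < M -> Gl f M l %| t ->
  exists ws, [/\ size ws <= M * size l, all (fun w => w \in l) ws & M %| sumn (map f ws) + t].
Proof.
move=> M0; elim: l t => [|c l IH] t /= ht.
  by exists [::]; split.
set g' := Gl f M l.
have g'0 : 0 < g' by apply: dvdn_gt0 M0 (Gl_dvdM f M l).
have [a _ ha] := Bezoutl (f c) g'0.
case/dvdnP: ht => k hk.
set x := (k * a) %% g'.
have hx : g' %| t + x * f c.
  have : g' %| t + k * a * f c by rewrite hk -mulnA -mulnDr dvdn_mull.
  rewrite {1}(divn_eq (k * a) g') mulnDl -/x addnCA dvdn_addr //.
  by rewrite -mulnA mulnCA dvdn_mulr.
have [ws' [h1 h2 h3]] := IH _ hx.
exists (nseq x c ++ ws'); split.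
- rewrite size_cat size_nseq mulnS leq_add //.
  apply: leq_trans (ltnW (ltn_pmod _ g'0)) _; exact: dvdn_leq M0 (Gl_dvdM f M l).
- rewrite all_cat; apply/andP; split.
    by apply/allP => y /nseqP [-> _]; exact: mem_head.
  by apply: sub_all h2 => y hy; rewrite inE hy orbT.
- rewrite map_cat sumn_cat map_nseq sumn_nseq.
  have -> : f c * x + sumn (map f ws') + t = sumn (map f ws') + (t + x * f c) by lia.
  done.
Qed.


Lemma prime_pow_lemma (p e : nat) : prime p -> 1 <= e ->
  (forall w, w < p -> p %| w ^ e - w) -> e = 1 %[mod p.-1].
Proof.
move=> pp he hw.
have p1 : 1 < p by apply: prime_gt1.
have allx : forall x : 'Z_p, (x ^+ e)%R = x.
  move=> x; apply: val_inj => /=.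
  have xp : (x : nat) < p by apply: leq_trans (ltn_ord x) _; rewrite Zp_cast.
  rewrite -[x in (x ^+ e)%R]natr_Zp -GRing.natrX val_Zp_nat //.
  have : x ^ e = x %[mod p].
    apply/eqP; rewrite eqn_mod_dvd ?hw //.
    case: (nat_of_ord x) => [|n]; first by rewrite exp0n.
    by rewrite -{1}(expn1 n.+1) leq_pexp2l.
  by move=> ->; rewrite modn_small.
have /cyclicP [g gen] := units_Zp_cyclic pp.
have og : #[g]%g = p.-1.
  by rewrite /order -gen card_units_Zp ?prime_gt0 // totient_prime.
have ge : (g ^+ e)%g = g.
  by apply: val_inj; rewrite FinRing.val_unitX allx.
have : (g ^+ e.-1 == 1)%g.
  apply/eqP; apply: (mulIg g); rewrite mul1g -expgSr prednK //.
rewrite -order_dvdn og.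
by move=> hd; apply/eqP; rewrite eqn_mod_dvd // subn1.
Qed.


Lemma G_one e b : 1 <= e -> 1 < b ->
  (forall p : nat, prime p -> p %| b.-1 -> e != 1 %[mod p.-1]) ->
  Gl (fun w => w ^ e - w) b.-1 (iota 0 b) = 1.
Proof.
move=> he hb hcond.
set G := Gl _ _ _.
have M0 : 0 < b.-1 by rewrite -ltnS prednK // ltnW.
have GM : G %| b.-1 by apply: Gl_dvdM.
have G0 : 0 < G by apply: dvdn_gt0 M0 GM.
case: (ltngtP G 1) => // [hG|hG]; first by move: hG G0; rewrite ltnS leqn0 => /eqP ->.
have pp := pdiv_prime hG.
have pG := pdiv_dvd G.
have pM : pdiv G %| b.-1 by apply: dvdn_trans pG GM.
have H := hcond _ pp pM.
suff : e = 1 %[mod (pdiv G).-1] by move=> E; rewrite E eqxx in H.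
apply: prime_pow_lemma => // w hw; apply: dvdn_trans pG _; apply: Gl_dvdf.
rewrite mem_iota add0n /=.
apply: leq_trans hw _; apply: leq_trans (dvdn_leq M0 pM) _.
by rewrite leq_pred.
Qed.


Lemma block e w : 1 <= e ->
  sumn (map (fun y => y.+1 ^ e) (iota 0 w)) = sumn (map (fun y => y ^ e) (iota 0 w)) + w ^ e.
Proof.
move=> he; elim: w => [|w IH]; first by rewrite /= exp0n.
rewrite -addn1 iotaD !map_cat !sumn_cat IH /= !addn0 add0n addn1.
by rewrite addnAC.
Qed.

Lemma blocks e ws : 1 <= e ->
  sumn (map (fun y => y.+1 ^ e) (flatten (map (iota 0) ws))) =
  sumn (map (fun y => y ^ e) (flatten (map (iota 0) ws))) + sumn (map (fun w => w ^ e) ws).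
Proof.
move=> he; elim: ws => [|w ws IH] //=.
rewrite !map_cat !sumn_cat IH block //.
by rewrite addnACA.
Qed.

Lemma sum_pow_split e ws : 1 <= e ->
  sumn (map (fun w => w ^ e) ws) = sumn (map (fun w => w ^ e - w) ws) + sumn ws.
Proof.
move=> he; elim: ws => [|w ws IH] //=; rewrite IH.
have : w <= w ^ e.
  case: w => [|w]; first by [].
  by rewrite -{1}(expn1 w.+1) leq_pexp2l.
by move=> hw; rewrite addnACA subnK.
Qed.

Lemma sumn_le b ws : all (fun w => w < b) ws -> sumn ws <= size ws * b.
Proof.
elim: ws => [|w ws IH] //=.
move=> /andP [hw hws].
rewrite mulSn; apply: leq_add; [exact: ltnW | exact: IH].
Qed.

Lemma P_step2 e b Z : 1 <= e -> 1 < b ->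
  (forall p : nat, prime p -> p %| b.-1 -> e != 1 %[mod p.-1]) ->
  Pm e b (rep b (b.-1 * b * b) + b ^ (b.-1 * b * b) * Z).
Proof.
move=> he hb hcond.
set N := b.-1 * b * b.
have M0 : 0 < b.-1 by rewrite -ltnS prednK // ltnW.
have hG : Gl (fun w => w ^ e - w) b.-1 (iota 0 b) %| T e b Z + N by rewrite G_one // dvd1n.
have [ws [hs hall hdiv]] := bez_list M0 hG.
have hwsb : all (fun w => w < b) ws.
  by apply: sub_all hall => w; rewrite mem_iota add0n.
have hsum : sumn ws <= N.
  apply: leq_trans (sumn_le hwsb) _; rewrite /N leq_mul2r.
  by rewrite size_iota in hs; rewrite hs orbT.
set ys := flatten (map (iota 0) ws) ++ nseq (N - sumn ws) 0.
have hsize : size ys = N.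
  rewrite size_cat size_nseq size_flatten /shape -map_comp.
  have -> : sumn (map (size \o iota 0) ws) = sumn ws.
    by elim: (ws) => [|w l IH] //=; rewrite IH size_iota.
  by rewrite subnKC.
have hys : all (fun y => y.+1 < b) ys.
  rewrite all_cat; apply/andP; split.
    apply/allP => y /flattenP [l /mapP [w hw ->]]; rewrite mem_iota add0n => /andP [_ hy].
    apply: (leq_ltn_trans hy); exact: (allP hwsb _ hw).
  by apply/allP => y /nseqP [-> _].
have hys0 : all (fun y => y < b) ys by apply: sub_all hys => y /ltnW.
have hysS : all (fun y => y < b) (map S ys) by rewrite all_map.
apply: P_cong => //; exists (num b ys).
have -> : num b ys + (rep b N + b ^ N * Z) = Z * b ^ N + num b (map S ys).
  by rewrite num_mapS hsize addnA [Z * _]mulnC addnC.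
rewrite T_shift //; last by rewrite -hsize -(size_map S) num_lt // ltnW.
rewrite !T_num // -map_comp /ys !map_cat !sumn_cat /=.
have -> : [seq (fun d => d ^ e) (S x) | x <- flatten [seq iota 0 i | i <- ws]] =
          [seq x.+1 ^ e | x <- flatten [seq iota 0 i | i <- ws]] by [].
rewrite blocks // (@sum_pow_split e ws he) !map_nseq !sumn_nseq /= exp0n // exp1n mul0n addn0 mul1n.
case/dvdnP: hdiv => k hk.
have E : forall TZ B F Sw, Sw <= N -> TZ + (B + (F + Sw) + (N - Sw)) = (F + (TZ + N)) + B.
  move=> TZ B F Sw h; lia.
by rewrite E // hk modnMDl.
Qed.


Lemma P_all e b d : 1 <= e -> 1 < b ->
  (forall p : nat, prime p -> p %| b.-1 -> e != 1 %[mod p.-1]) -> Pm e b d.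
Proof.
move=> he hb hcond.
case: (posnP d) => [->|d0]; first exact: P0.
set N := b.-1 * b * b.
set E := b.-1 ^ e.
set C := T e b (b ^ d - d).
have b0 : 0 < b by apply: ltnW.
have M0 : 0 < b.-1 by rewrite -ltnS prednK.
have E0 : 0 < E by rewrite expn_gt0 M0.
have cop : coprime E (b ^ N) by apply: coprimeXl; apply: coprimeXr; apply: coprimePn.
case: (egcdnP (b ^ N) E0) => km kn hk _.
rewrite (eqP cop) in hk.
set X := rep b N + 1 + b ^ N * C.
have hXC : C <= X.
  apply: leq_trans (leq_addl _ _); by rewrite leq_pmull // expn_gt0 b0.
set k := km * (X - C).
set v := b ^ (d + k) - d.
have hdP : d <= b ^ d by apply: ltnW; apply: ltn_expl.
have hv : v = (b ^ k - 1) * b ^ d + (b ^ d - d).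
  rewrite /v mulnBl mul1n -expnD [k + d]addnC.
  have : b ^ d <= b ^ (d + k) by rewrite leq_pexp2l // leq_addr.
  move: (b ^ (d + k)) (b ^ d) hdP => Q P hP hPQ; lia.
have Tv : T e b v = E * k + C.
  rewrite hv T_shift // ?T_predpow //.
  by rewrite ltn_subrL d0 expn_gt0 b0.
have Tvd : T e b (v + d) = 1.
  rewrite /v subnK ?T_pow //.
  by apply: leq_trans hdP _; rewrite leq_pexp2l // leq_addr.
refine (@P_step e b d v (rep b N + b ^ N * (C + (X - C) * kn)) he hb _ _).
  right; rewrite Tv Tvd /k mulnA [E * km]mulnC hk.
  have hX : X - C + C = rep b N + 1 + b ^ N * C by rewrite subnK.
  move: hX; move: (X - C) => Y hX.
  rewrite mulnDl mul1n mulnDr.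
  have -> : kn * b ^ N * Y = b ^ N * (Y * kn) by rewrite [Y * kn]mulnC mulnA [kn * b ^ N]mulnC.
  move: (b ^ N * (Y * kn)) (b ^ N * C) hX => W V; lia.
exact: P_step2.
Qed.


Theorem theorem1p1 (e b : nat) (he : 1 <= e) (hb : 2 <= b)
  (hcond : forall p : nat, prime p -> p %| b.-1 -> e != 1 %[mod p.-1]) :
  forall m : nat, 0 < m ->
    exists l : nat, 0 < l /\ forall i : nat, 1 <= i <= m -> happy e b (l + i).
Proof.
move=> m hm.
have HP : forall d, Pm e b d by move=> d; apply: P_all.
have [Ls [c H]] := collapse HP (iota 1 m).
have Hg : good e b (map (apply_steps e b Ls) (iota 1 m)).
  by apply: (@good_const _ _ _ c) => // s /mapP [x hx ->]; exact: H.
have [x [hx Hx]] := good_steps he hb Hg.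
exists x; split => // i /andP [h1 h2]; apply: Hx.
by rewrite mem_iota h1 /= add1n ltnS.
Qed.
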